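(* There is no binary self-orthogonal $[54,6,26]$ code.
   Context: A binary linear code $C$ is self-orthogonal if $C\subseteq C^\perp$. *)

(* Defs.v *)
From HB Require Import structures.
From mathcomp Require Import all_boot all_order all_algebra.
Set Implicit Arguments. Unset Strict Implicit. Unset Printing Implicit Defensive.
Import GRing.Theory.
Local Open Scope ring_scope.

Definition wt (n : nat) (v : 'rV['F_2]_n) : nat := #|[set i : 'I_n | v 0 i != 0]|.

Definition dotv (n : nat) (u v : 'rV['F_2]_n) : 'F_2 := \sum_(i < n) u 0 i * v 0 i.

Definition code (n : nat) := {vspace 'rV['F_2]_n}.

(* C is self-orthogonal: C is contained in its dual C^perp,
   i.e. every codeword is orthogonal to every codeword. *)
Definition self_orthogonal (n : nat) (C : code n) : Prop :=
  forall u v, u \in C -> v \in C -> dotv u v = 0.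

Definition min_distance_is (n : nat) (C : code n) (d : nat) : Prop :=
  (exists2 c, c \in C & (c != 0) /\ wt c = d) /\
  (forall c, c \in C -> c != 0 -> (d <= wt c)%N).

Definition is_nkd_code (n k d : nat) (C : code n) : Prop :=
  \dim C = k /\ min_distance_is C d.

(* Main.v *)
Require Import Defs.
From mathcomp Require Import all_boot all_order all_algebra.
From mathcomp Require Import finfield zify.
Set Implicit Arguments. Unset Strict Implicit. Unset Printing Implicit Defensive.
Import GRing.Theory.

Lemma F2cases (a : 'F_2) : a = 0%R \/ a = 1%R.
Proof. case: a => [[|[|m]]] //= H; [left|right]; exact: val_inj. Qed.

Definition inter n (u v : 'rV['F_2]_n) : nat :=
  \sum_(i < n) ((u 0%R i != 0%R) && (v 0%R i != 0%R) : nat).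

Lemma wt_sum n (v : 'rV['F_2]_n) : wt v = \sum_(i < n) (v 0%R i != 0%R : nat).
Proof.
rewrite /wt -sum1_card big_mkcond /=; apply: eq_bigr => i _.
by rewrite inE; case: (_ != _).
Qed.

Lemma wtD n (u v : 'rV['F_2]_n) : wt (u + v) + 2 * inter u v = wt u + wt v.
Proof.
rewrite !wt_sum /inter big_distrr /= -!big_split /=; apply: eq_bigr => i _.
rewrite mxE.
by case: (F2cases (u 0%R i)) => ->; case: (F2cases (v 0%R i)) => ->.
Qed.

Lemma dotvE n (u v : 'rV['F_2]_n) : dotv u v = ((inter u v)%:R)%R.
Proof.
rewrite /dotv /inter natr_sum; apply: eq_bigr => i _.
by case: (F2cases (u 0%R i)) => ->; case: (F2cases (v 0%R i)) => ->; rewrite ?mulr0 ?mul0r ?mulr1 ?eqxx ?oner_eq0.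
Qed.

Lemma F2nat0 m : ((m%:R)%R : 'F_2) = 0%R -> ~~ odd m.
Proof.
have := val_Fp_nat (isT : prime 2) m; move=> h; move/(congr1 (@nat_of_ord _)); rewrite h modn2 /=.
by case: (odd m).
Qed.

Lemma inter_even n (C : code n) u v : self_orthogonal C -> u \in C -> v \in C ->
  ~~ odd (inter u v).
Proof. by move=> so uC vC; apply: F2nat0; rewrite -dotvE; apply: so. Qed.

Lemma inter_self n (u : 'rV['F_2]_n) : inter u u = wt u.
Proof. by rewrite /inter wt_sum; apply: eq_bigr => i _; rewrite andbb. Qed.

Lemma m4a a b c i : a + 2 * i = b + c -> ~~ odd i -> ~~ odd b -> ~~ odd c ->
  ~~ (4 %| b) -> ~~ (4 %| c) -> 4 %| a.
Proof. move=> *; lia. Qed.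

Lemma m4b a b c i : a + 2 * i = b + c -> ~~ odd i -> 4 %| b -> 4 %| c -> 4 %| a.
Proof. move=> *; lia. Qed.

Lemma m28 a : 25 < a -> 4 %| a -> 28 <= a.
Proof. move=> *; lia. Qed.

Theorem corollary6p6 :
  ~ (exists C : code 54, is_nkd_code 6 26 C /\ self_orthogonal C).
Proof.
move=> [C [[dimC [_ mind]] so]].
have evw : forall c, c \in C -> ~~ odd (wt c).
  by move=> c cC; rewrite -inter_self; exact: (inter_even so cC cC).
pose D := [set x | (x \in C) && (4 %| wt x)].
pose E := [set x | (x \in C) && ~~ (4 %| wt x)].
have cardC : #|[set x | x \in C]| = 64.
  rewrite (_ : 64 = #|'F_2| ^ \dim C)%N; last by rewrite card_Fp // dimC.
  rewrite -card_vspace; apply: eq_card => x; by rewrite inE.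
have cardDE : #|[set x | x \in C]| = #|D| + #|E|.
  rewrite -(cardsID D [set x | x \in C]); congr (_ + _); apply: eq_card => x;
  by rewrite !inE; case: (x \in C); case: (4 %| wt x).
have ED : #|E| <= #|D|.
  case: (set_0Vmem E) => [-> | [e eE]]; first by rewrite cards0.
  rewrite -(card_imset _ (addIr e)); apply: subset_leq_card.
  apply/subsetP => y /imsetP [x xE ->].
  move: xE eE; rewrite !inE => /andP [xC x4] /andP [eC e4].
  rewrite rpredD //=.
  exact: (m4a (wtD x e) (inter_even so xC eC) (evw _ xC) (evw _ eC) x4 e4).
have Dadd : forall x y, x \in D -> y \in D -> (x + y)%R \in D.
  move=> x y; rewrite !inE => /andP [xC x4] /andP [yC y4].
  rewrite rpredD //=.
  exact: (m4b (wtD x y) (inter_even so xC yC) x4 y4).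
have D32 : 32 <= #|D| by lia.
have D0 : 0%R \in D by rewrite inE mem0v /wt; apply/dvdnP; exists 0;
  apply/eqP; rewrite cards_eq0; apply/eqP/setP => i; rewrite !inE mxE eqxx.
have colb : forall i : 'I_54, 2 * (\sum_(x in D) (x 0%R i != 0%R : nat)) <= #|D|.
  move=> i; pose A := [set x in D | x 0%R i != 0%R].
  have sA : \sum_(x in D) (x 0%R i != 0%R : nat) = #|A|.
    rewrite -sum1_card [LHS]big_mkcond [RHS]big_mkcond /=; apply: eq_bigr => x _.
    by rewrite !inE; case: (_ && _); case: (_ != _).
  rewrite sA.
  have AD : #|D| = #|A| + #|D :\: A|.
    rewrite -(cardsID A D); congr (_ + _); apply: eq_card => x;
    by rewrite !inE; case: (x \in C); case: (4 %| wt x).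
  rewrite AD; suff : #|A| <= #|D :\: A| by lia.
  case: (set_0Vmem A) => [-> | [d dA]]; first by rewrite cards0.
  rewrite -(card_imset _ (addIr d)); apply: subset_leq_card.
  apply/subsetP => y /imsetP [x xA ->].
  have /setIdP [xD xi] := xA; have /setIdP [dD di] := dA.
  apply/setDP; split; first exact: Dadd.
  rewrite inE (Dadd _ _ xD dD) /= mxE negbK.
  move: xi di; case: (F2cases (x 0%R i)) => ->; case: (F2cases (d 0%R i)) => -> //.
have ub : 2 * (\sum_(x in D) wt x) <= 54 * #|D|.
  have -> : \sum_(x in D) wt x = \sum_(i < 54) \sum_(x in D) (x 0%R i != 0%R : nat).
    rewrite exchange_big /=; apply: eq_bigr => x _; exact: wt_sum.
  rewrite big_distrr /=.
  apply: (@leq_trans (\sum_(i < 54) #|D|)); first exact: leq_sum (fun i _ => colb i).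
  by rewrite sum_nat_const card_ord.
have lb : 28 * (#|D| - 1) <= \sum_(x in D) wt x.
  rewrite (bigD1 0%R) //= (cardsD1 0%R D) D0 /= add1n subSS.
  apply: leq_trans (leq_addl _ _).
  rewrite subn0 mulnC -sum_nat_const big_mkcond [X in _ <= X]big_mkcond /=.
  apply: leq_sum => x _; rewrite !inE.
  case x0: (x == 0%R) => //=; case xC: (x \in C) => //=; case x4: (4 %| wt x) => //=.
  have := mind x xC; rewrite x0 => /(_ isT) h; exact: m28 h x4.
lia.
Qed.
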